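(* Let $p\ge3$ be a prime and let $d\ge2$ be an integer. There exists $\Theta(d,p)$ such that whenever $T:[n_1]\times\dots\times[n_d]\to\mathbb{F}_p$ is an order-$d$ tensor with $\mathrm{tr}\,T\ge\Theta(d,p)$ and $S_1,\dots,S_d$ are subsets of $\mathbb{F}_p$ each containing at least two elements, the $d$-linear form $m$ associated with $T$ satisfies $m(S_1^{n_1}\times\dots\times S_d^{n_d})=\mathbb{F}_p$.
   Context: The $d$-linear form associated with $T$ is $m:\mathbb{F}_p^{n_1}\times\dots\times\mathbb{F}_p^{n_d}\to\mathbb{F}_p$, $m(x^1,\dots,x^d)=\sum_{(i_1,\dots,i_d)}T(i_1,\dots,i_d)x^1_{i_1}\cdots x^d_{i_d}$. The tensor rank $\mathrm{tr}\,T$ is the least $k\ge0$ such that there exist functions $a_{i,\alpha}:[n_\alpha]\to\mathbb{F}_p$ ($i\in[k],\alpha\in[d]$) with $T(x_1,\dots,x_d)=\sum_{i=1}^ka_{i,1}(x_1)\cdots a_{i,d}(x_d)$ for all $(x_1,\dots,x_d)$. *)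

(* Defs.v *)
From HB Require Import structures.
From mathcomp Require Import all_boot all_order all_algebra.
Set Implicit Arguments. Unset Strict Implicit. Unset Printing Implicit Defensive.
Import GRing.Theory.
Local Open Scope ring_scope.

(* Multi-indices (i_1,...,i_d) in [n_1] x ... x [n_d], with [n] = 'I_n (0-based). *)
Definition multi_index (d : nat) (n : 'I_d -> nat) : finType :=
  {dffun forall a : 'I_d, 'I_(n a)}.

Definition tensor (F : Type) (d : nat) (n : 'I_d -> nat) := multi_index n -> F.

Definition mlform (F : comNzRingType) (d : nat) (n : 'I_d -> nat)
  (T : tensor F n) (x : forall a : 'I_d, 'I_(n a) -> F) : F :=
  \sum_(i : multi_index n) T i * \prod_(a < d) x a (i a).

Definition rank_decomp (F : comNzRingType) (d : nat) (n : 'I_d -> nat)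
  (T : tensor F n) (k : nat) : Prop :=
  exists f : 'I_k -> forall a : 'I_d, 'I_(n a) -> F,
    forall i : multi_index n, T i = \sum_(j < k) \prod_(a < d) f j a (i a).

(* "tr T >= r": the least k admitting such a decomposition is at least r,
   i.e. every decomposition uses at least r terms. *)
Definition tensor_rank_ge (F : comNzRingType) (d : nat) (n : 'I_d -> nat)
  (T : tensor F n) (r : nat) : Prop :=
  forall k, rank_decomp T k -> (r <= k)%N.

(* Main.v *)
Require Import Defs.
From HB Require Import structures.
From mathcomp Require Import all_boot all_order all_algebra zify ring.
Set Implicit Arguments. Unset Strict Implicit. Unset Printing Implicit Defensive.
Import GRing.Theory.
Local Open Scope ring_scope.

Lemma card_setE (I : finType) (P : pred I) : #|[set i | P i]| = (\sum_i (P i : nat))%N.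
Proof.
rewrite -sum1_card big_mkcond /=; apply: eq_bigr => i _; rewrite inE; by case: (P i).
Qed.

Lemma avg (I Z : finType) (G0 : pred I) (G1 : Z -> pred I) : (0 < #|Z|)%N ->
  (forall i, G0 i -> #|Z| <= 2 * #|[set z | G1 z i]|)%N ->
  exists z, (#|[set i | G0 i]| <= 2 * #|[set i | G1 z i]|)%N.
Proof.
move=> Z0 H.
case: (boolP [exists z, #|[set i | G0 i]| <= 2 * #|[set i | G1 z i]|]%N).
  by case/existsP=> z hz; exists z.
rewrite negb_exists => /forallP Hn; exfalso.
have e1 : (\sum_z #|[set i | G1 z i]| = \sum_i #|[set z | G1 z i]|)%N.
  rewrite (eq_bigr (fun z => \sum_i (G1 z i : nat))%N); last by move=> z _; rewrite card_setE.
  rewrite exchange_big /=; apply: eq_bigr => i _; by rewrite card_setE.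
have h1 : (\sum_(i | G0 i) #|Z| <= \sum_i 2 * #|[set z | G1 z i]|)%N.
  rewrite [X in (_ <= X)%N](bigID G0) /=; apply: leq_trans (leq_addr _ _).
  by apply: leq_sum => i /H.
rewrite -big_distrr /= -e1 big_distrr /= sum_nat_const in h1.
have h2 : (\sum_(z : Z) 2 * #|[set i | G1 z i]| <= \sum_(z : Z) (#|[set i | G0 i]| - 1))%N.
  apply: leq_sum => z _; move: (Hn z); rewrite -ltnNge; lia.
rewrite sum_nat_const in h2.
case/card_gt0P: (Z0) => z0 _; move: (Hn z0); rewrite -ltnNge => h3.
have eG : #|[set i | G0 i]| = #|G0| by apply: eq_card => i; rewrite inE.
move: h1 h2 h3 Z0; rewrite cardT -cardE eG; set a := (\sum_(z : Z) _)%N; nia.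
Qed.
Lemma half (V : zmodType) (W : finType) (PW : pred W) L
  (g : W -> {ffun 'I_L -> bool} -> V) (al : W -> V) (be : W -> 'I_L -> V) :
  (forall w z, PW w -> g w z = al w + \sum_j (if z j then be w j else 0)) ->
  (exists w, PW w /\ (al w != 0 \/ exists j, be w j != 0)) ->
  (#|{ffun 'I_L -> bool}| <= 2 * #|[set z | [exists w, PW w && (g w z != 0)%R]]|)%N.
Proof.
move=> Hg Hnz; set A := [set z | _].
case: (boolP [exists w, [exists j, PW w && (be w j != 0)]]).
  case/existsP => w /existsP [j /andP[pw bj]].
  pose fl (z : {ffun 'I_L -> bool}) := [ffun k => if k == j then ~~ z k else z k].
  have flK : involutive fl.
    by move=> z; apply/ffunP=> k; rewrite !ffunE; case: eqP => // ->; rewrite negbK.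
  have flA : forall z, z \notin A -> fl z \in A.
    move=> z; rewrite !inE negb_exists => /forallP /(_ w); rewrite pw /= negbK => /eqP gz.
    apply/existsP; exists w; rewrite pw /=.
    have : g w (fl z) - g w z = if z j then - be w j else be w j.
      rewrite !Hg // opprD addrACA subrr add0r.
      rewrite (bigD1 j) //= [X in _ - X](bigD1 j) //= ffunE eqxx.
      rewrite (eq_bigr (fun k => if z k then be w k else 0)); last first.
        by move=> k /negbTE kj; rewrite ffunE kj.
      rewrite opprD addrACA subrr addr0; by case: (z j); rewrite /= ?subr0 ?sub0r.
    rewrite gz subr0 => ->; case: (z j) => //; by rewrite oppr_eq0.
  have c1 : (#|~: A| <= #|A|)%N.
    rewrite -(card_imset (~: A) (can_inj flK)); apply: subset_leq_card.
    apply/subsetP => x /imsetP [z]; rewrite inE => zA ->; exact: flA.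
  move: (cardsC A); rewrite cardT -cardE; lia.
rewrite negb_exists => /forallP Hb.
have Hb' : forall w j, PW w -> be w j = 0.
  move=> w j pw; move: (Hb w); rewrite negb_exists => /forallP /(_ j); rewrite pw /=.
  by move/negPn/eqP.
case: Hnz => w [pw [aw|[j bj]]]; last by move: bj; rewrite Hb' // eqxx.
have -> : A = setT.
  apply/setP=> z; rewrite !inE; apply/existsP; exists w; rewrite pw Hg //.
  rewrite big1 ?addr0 // => k _; rewrite Hb' //; by case: (z k).
rewrite cardsT cardT -cardE; lia.
Qed.
Lemma closure p (A : {set 'F_p}) (b a0 : 'F_p) : b != 0 -> a0 \in A ->
  (forall a, a \in A -> a + b \in A) -> A = setT.
Proof.
move=> b0 a0A hA.
have hk : forall k : nat, a0 + k%:R * b \in A.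
  elim=> [|k IH]; first by rewrite mul0r addr0.
  by rewrite mulrSr mulrDl mul1r addrA; apply: hA.
apply/setP=> t; rewrite inE.
have -> : t = a0 + (nat_of_ord ((t - a0) / b))%:R * b.
  by rewrite natr_Zp divfK // addrC subrK.
exact: hk.
Qed.

Definition sums (I : finType) p (be : I -> 'F_p) (J : {set I}) : {set 'F_p} :=
  [set \sum_(i in K) be i | K : {set I} in powerset J].

Lemma sums_card (I : finType) p (be : I -> 'F_p) : prime p -> forall m (J : {set I}),
  #|J| = m -> (forall i, i \in J -> be i != 0) -> (minn m.+1 p <= #|sums be J|)%N.
Proof.
move=> pp; elim=> [|m IH] J cJ nz.
  have : (0 : 'F_p) \in sums be J.
    apply/imsetP; exists set0; first by rewrite powersetE sub0set.
    by rewrite big_set0.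
  move=> h; have : (0 < #|sums be J|)%N by apply/card_gt0P; exists 0.
  lia.
have : (0 < #|J|)%N by rewrite cJ.
case/card_gt0P=> j jJ.
set J' := J :\ j.
have cJ' : #|J'| = m by move: (cardsD1 j J); rewrite jJ cJ add1n => -[].
have nz' : forall i, i \in J' -> be i != 0 by move=> i; rewrite inE => /andP[_ /nz].
move: (IH J' cJ' nz') => h.
have sub : sums be J' \subset sums be J.
  apply/subsetP=> x /imsetP [K]; rewrite powersetE => KJ' ->.
  apply/imsetP; exists K => //; rewrite powersetE; apply: subset_trans KJ' _.
  exact: subsetDl.
have cT : #|[set: 'F_p]| = p by rewrite cardsT card_Fp.
case: (boolP (sums be J' == setT)) => [/eqP eT|nT].
  have -> : sums be J = setT by apply/eqP; rewrite eqEsubset subsetT -eT sub.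
  rewrite cT; lia.
have [a aS aN] : exists2 a, a \in sums be J' & a + be j \notin sums be J'.
  apply/exists_inP; apply: contraR nT => /exists_inP hn; apply/eqP.
  apply: (@closure p _ (be j) 0 (nz j jJ)).
    apply/imsetP; exists set0; first by rewrite powersetE sub0set.
    by rewrite big_set0.
  by move=> x xS; apply/negPn/negP => xn; apply: hn; exists x.
have sub2 : (a + be j) |: sums be J' \subset sums be J.
  rewrite subUset sub andbT sub1set.
  case/imsetP: aS => K; rewrite powersetE => KJ' ->.
  apply/imsetP; exists (j |: K).
    rewrite powersetE subUset sub1set jJ /=; apply: subset_trans KJ' _; exact: subsetDl.
  have jK : j \notin K by apply/negP => /(subsetP KJ'); rewrite !inE eqxx.
  by rewrite big_setU1 //= addrC.
move: (subset_leq_card sub2); rewrite cardsU1 aN /=.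
have : (#|sums be J'| < p)%N.
  rewrite -[X in (_ < X)%N]cT; apply: proper_card; rewrite properEneq subsetT andbT; exact: nT.
move: h; move: (#|sums be J'|) (#|sums be J|) => x y; lia.
Qed.

Lemma subset_sum (I : finType) p (be : I -> 'F_p) (J : {set I}) : prime p ->
  (forall i, i \in J -> be i != 0) -> (p.-1 <= #|J|)%N ->
  forall t, exists K : {set I}, K \subset J /\ \sum_(i in K) be i = t.
Proof.
move=> pp nz cJ t.
have pg : (1 < p)%N by apply: prime_gt1.
have h := sums_card pp (erefl #|J|) nz.
have eT : sums be J = setT.
  apply/eqP; rewrite eqEcard subsetT cardsT card_Fp //; lia.
have : t \in sums be J by rewrite eT inE.
case/imsetP=> K; rewrite powersetE => KJ ->; by exists K.
Qed.
Definition LL d (n : 'I_d -> nat) := (\max_(a < d) n a)%N.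
Definition wd d (n : 'I_d -> nat) (a : 'I_d) (t : 'I_(n a)) : 'I_(LL n) :=
  widen_ord (@leq_bigmax _ n a) t.
Lemma wd_eq d (n : 'I_d -> nat) a (t t' : 'I_(n a)) : (wd t == wd t') = (t == t').
Proof. by apply/eqP/eqP => [/(congr1 val) /= /val_inj|->]. Qed.
Lemma wd_inj d (n : 'I_d -> nat) a : injective (@wd d n a).
Proof. by move=> t t' /eqP; rewrite wd_eq => /eqP. Qed.

Notation Yt d n := {ffun 'I_d * 'I_(LL n) -> bool}.

Definition XX (F : Type) d (n : 'I_d -> nat) (u v : 'I_d -> F) (y : Yt d n) :
  forall a, 'I_(n a) -> F := fun a t => if y (a, wd t) then v a else u a.

Definition upd d (n : 'I_d -> nat) (y : Yt d n) (b : 'I_d) (z : {ffun 'I_(LL n) -> bool}) : Yt d n :=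
  [ffun k => if k.1 == b then z k.2 else y k].

Arguments XX {F d n} u v y a t.
Lemma XX_upd_ne F d n (u v : 'I_d -> F) y b z c t : c != b ->
  @XX F d n u v (upd y b z) c t = XX u v y c t.
Proof. by move=> /negbTE cb; rewrite /XX ffunE /= cb. Qed.

Lemma XX_upd_eq F d n (u v : 'I_d -> F) y b z t :
  @XX F d n u v (upd y b z) b t = if z (wd t) then v b else u b.
Proof. by rewrite /XX ffunE /= eqxx. Qed.

Definition agree d (n : 'I_d -> nat) (B : {set 'I_d}) (r s : multi_index n) :=
  [forall c in B, r c == s c].

Definition PP p d (n : 'I_d -> nat) (T : tensor 'F_p n) (u v : 'I_d -> 'F_p) (y : Yt d n)
  (B : {set 'I_d}) (s : multi_index n) : 'F_p :=
  \sum_(r | agree B r s) T r * \prod_(c | c \notin B) XX u v y c (r c).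

Definition QQ p d (n : 'I_d -> nat) (u v : 'I_d -> 'F_p) (y : Yt d n)
  (B : {set 'I_d}) (r : multi_index n) : 'F_p :=
  \prod_(c | c \notin B) XX u v y c (r c).

Lemma P_step p d (n : 'I_d -> nat) (T : tensor 'F_p n) (u v : 'I_d -> 'F_p) (y : Yt d n) (B : {set 'I_d}) (b : 'I_d) z (s : multi_index n) : b \in B ->
  PP T u v (upd y b z) (B :\ b) s =
  \sum_(r | agree (B :\ b) r s) T r * u b * QQ u v y B r +
  \sum_j (if z j then \sum_(r | agree (B :\ b) r s)
            (if wd (r b) == j then T r * (v b - u b) * QQ u v y B r else 0) else 0).
Proof.
move=> bB.
have e1 : forall j, (if z j then \sum_(r | agree (B :\ b) r s)
            (if wd (r b) == j then T r * (v b - u b) * QQ u v y B r else 0) else 0) =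
          \sum_(r | agree (B :\ b) r s)
            (if z j && (wd (r b) == j) then T r * (v b - u b) * QQ u v y B r else 0).
  by move=> j; case: (z j) => //=; rewrite big1.
rewrite (eq_bigr _ (fun j _ => e1 j)) exchange_big /= -big_split /=.
apply: eq_bigr => r _.
rewrite [X in _ = _ + X](bigD1 (wd (r b))) //= eqxx andbT.
rewrite [X in _ = _ + (_ + X)]big1 ?addr0; last first.
  by move=> j /negbTE jn; rewrite eq_sym jn andbF.
rewrite (bigD1 b) /=; last by rewrite !inE eqxx.
rewrite XX_upd_eq /QQ.
rewrite [X in T r * (_ * X) = _](eq_bigl (fun c => c \notin B)); last first.
  by move=> c; rewrite !inE; case: (eqVneq c b) => [->|_] /=; rewrite ?eqxx ?bB ?andbT.
rewrite [X in T r * (_ * X) = _](eq_bigr (fun c => XX u v y c (r c))); last first.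
  move=> c cB; apply: XX_upd_ne; apply/eqP => cb; move: cB; rewrite cb bB //.
case: (z _); ring.
Qed.

Lemma beta_diag p d (n : 'I_d -> nat) (T : tensor 'F_p n) (u v : 'I_d -> 'F_p) (y : Yt d n)
  (B : {set 'I_d}) (b : 'I_d) (s : multi_index n) : b \in B ->
  \sum_(r | agree (B :\ b) r s)
     (if wd (r b) == wd (s b) then T r * (v b - u b) * QQ u v y B r else 0)
  = (v b - u b) * PP T u v y B s.
Proof.
move=> bB; rewrite -big_mkcondr /= /PP big_distrr /=.
apply: eq_big => [r|r _]; last by rewrite /QQ; ring.
rewrite wd_eq /agree; apply/andP/forall_inP.
  case=> /forall_inP h /eqP e c cB; case: (eqVneq c b) => [->|cb]; first by rewrite e.
  by apply: h; rewrite !inE cb.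
move=> h; split; last by apply: h.
by apply/forall_inP => c; rewrite !inE => /andP[_ /h].
Qed.

Definition GG p d (n : 'I_d -> nat) (T : tensor 'F_p n) (u v : 'I_d -> 'F_p) (a0 : 'I_d)
  (y : Yt d n) (B : {set 'I_d}) (i : 'I_(n a0)) : bool :=
  [exists s : multi_index n, (s a0 == i) && (PP T u v y B s != 0)].
Arguments GG {p d n} T u v a0 y B i.


Lemma step p d (n : 'I_d -> nat) (T : tensor 'F_p n) (u v : 'I_d -> 'F_p) (a0 : 'I_d)
  (y : Yt d n) (B : {set 'I_d}) (b : 'I_d) : (forall a, u a != v a) -> b \in B ->
  exists z, (#|[set i | GG T u v a0 y B i]| <=
             2 * #|[set i | GG T u v a0 (upd y b z) (B :\ b) i]|)%N.
Proof.
move=> uv bB; apply: avg; first by apply/card_gt0P; exists [ffun=> false].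
move=> i /existsP [s /andP [si Ps]].
have h := (@half _ (multi_index n) (fun s : multi_index n => s a0 == i) (LL n) (fun s z => PP T u v (upd y b z) (B :\ b) s)
  (fun s => \sum_(r | agree (B :\ b) r s) T r * u b * QQ u v y B r)
  (fun s j => \sum_(r | agree (B :\ b) r s)
     (if wd (r b) == j then T r * (v b - u b) * QQ u v y B r else 0))).
apply: (leq_trans (h _ _)).
- move=> w z _; exact: P_step.
- exists s; split => //; right; exists (wd (s b)).
  by rewrite beta_diag // mulf_neq0 // subr_eq0 eq_sym uv.
rewrite leq_mul2l; apply/orP; right; apply: subset_leq_card; apply/subsetP => z.
by rewrite !inE.
Qed.

Lemma iter p d (n : 'I_d -> nat) (T : tensor 'F_p n) (u v : 'I_d -> 'F_p) (a0 : 'I_d) :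
  (forall a, u a != v a) -> forall m (B : {set 'I_d}) (y : Yt d n), #|B| = m.+1 -> a0 \in B ->
  exists y' : Yt d n, (#|[set i | GG T u v a0 y B i]| <=
     2 ^ m * #|[set i | GG T u v a0 y' [set a0] i]|)%N.
Proof.
move=> uv; elim=> [|m IH] B y cB aB.
  exists y; rewrite expn0 mul1n.
  have -> : B = [set a0] by move/eqP: cB => /cards1P [x Bx]; move: aB; rewrite Bx inE => /eqP ->.
  by [].
have : (0 < #|B :\ a0|)%N by move: (cardsD1 a0 B); rewrite aB cB add1n => -[<-].
case/card_gt0P => b; rewrite !inE => /andP [ba bB].
have [z hz] := @step p d n T u v a0 y B b uv bB.
have cB' : #|B :\ b| = m.+1 by move: (cardsD1 b B); rewrite bB cB add1n => -[].
have aB' : a0 \in B :\ b by rewrite !inE aB andbT; apply: contra ba => /eqP ->.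
have [y' hy'] := IH _ (upd y b z) cB' aB'.
exists y'; rewrite expnS -mulnA; apply: leq_trans hz _; by rewrite leq_mul2l hy' orbT.
Qed.

Definition Fi p d (n : 'I_d -> nat) (T : tensor 'F_p n) (u v : 'I_d -> 'F_p) (a0 : 'I_d)
  (y : Yt d n) (i : 'I_(n a0)) : 'F_p :=
  \sum_(r : multi_index n | r a0 == i) T r * \prod_(c | c != a0) XX u v y c (r c).
Arguments Fi {p d n} T u v a0 y i.

Lemma P_setT p d (n : 'I_d -> nat) (T : tensor 'F_p n) (u v : 'I_d -> 'F_p)
  (y : Yt d n) (s : multi_index n) : PP T u v y setT s = T s.
Proof.
rewrite /PP (big_pred1 s); last first.
  move=> r; rewrite /agree /=; apply/forall_inP/eqP => [h|->//].
  by apply/ffunP => c; apply/eqP; apply: h; rewrite inE.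
by rewrite big_pred0 ?mulr1 // => c; rewrite inE.
Qed.

Lemma P_a0 p d (n : 'I_d -> nat) (T : tensor 'F_p n) (u v : 'I_d -> 'F_p) (a0 : 'I_d)
  (y : Yt d n) (s : multi_index n) : PP T u v y [set a0] s = Fi T u v a0 y (s a0).
Proof.
rewrite /PP /Fi; apply: eq_big => [r|r _].
  rewrite /agree; apply/forall_inP/idP => [h|/eqP h c]; first by apply: h; rewrite inE.
  by rewrite inE => /eqP ->; rewrite h.
by apply: congr1; apply: eq_bigl => c; rewrite inE.
Qed.

Lemma mlform_split p d (n : 'I_d -> nat) (T : tensor 'F_p n) (u v : 'I_d -> 'F_p) (a0 : 'I_d)
  (y : Yt d n) : mlform T (XX u v y) = \sum_i XX u v y a0 i * Fi T u v a0 y i.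
Proof.
rewrite /mlform (partition_big (fun r : multi_index n => r a0) xpredT) //=.
apply: eq_bigr => i _; rewrite /Fi big_distrr; apply: eq_bigr => r /eqP ri.
by rewrite (bigD1 a0) //= ri; ring.
Qed.

Lemma Fi_upd p d (n : 'I_d -> nat) (T : tensor 'F_p n) (u v : 'I_d -> 'F_p) (a0 : 'I_d)
  (y : Yt d n) z i : Fi T u v a0 (upd y a0 z) i = Fi T u v a0 y i.
Proof.
apply: eq_bigr => r _; congr (_ * _); apply: eq_bigr => c ca; exact: XX_upd_ne.
Qed.

Lemma rank_small p d (n : 'I_d -> nat) (T : tensor 'F_p n) (a1 : 'I_d) :
  rank_decomp T #|[set r | T r != 0]|.
Proof.
exists (fun j a t => (if a == a1 then T (enum_val j) else 1) * (t == enum_val j a)%:R) => i.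
transitivity (\sum_(x in [set r | T r != 0])
   \prod_a ((if a == a1 then T x else 1) * (i a == x a)%:R)); last by rewrite big_enum_val.
have e : forall x : multi_index n,
   \prod_a ((if a == a1 then T x else 1) * (i a == x a)%:R) = T x * (i == x)%:R.
  move=> x; rewrite big_split /= (bigD1 a1) //= eqxx big1 ?mulr1; last first.
    by move=> a /negbTE ->.
  case: (eqVneq i x) => [->|ne]; first by rewrite big1 // => a _; rewrite eqxx.
  have [a ha] : exists a, i a != x a.
    apply/existsP; apply: contraR ne; rewrite negb_exists => /forallP h.
    by apply/eqP/ffunP => a; apply/eqP; move: (h a); rewrite negbK.
  by rewrite (bigD1 a) //= (negbTE ha) mul0r mulr0.
rewrite (eq_bigr _ (fun x _ => e x)).
case: (eqVneq (T i) 0) => [Ti|Ti].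
  rewrite Ti big1 // => x _; case: (eqVneq i x) => [<-|_]; by rewrite ?Ti ?mulr0 ?mul0r.
rewrite (bigD1 i) ?inE //= eqxx mulr1 big1 ?addr0 // => x /andP [_ xi].
by rewrite eq_sym (negbTE xi) mulr0.
Qed.

Lemma foldr_bound (I : Type) (f : I -> nat) k (s : seq I) : (forall x, f x <= k)%N ->
  (foldr muln 1 [seq f x | x <- s] <= k ^ size s)%N.
Proof.
move=> h; elim: s => [|x s IH] //=; rewrite expnS; exact: leq_mul.
Qed.

Lemma card_nz p d (n : 'I_d -> nat) (T : tensor 'F_p n) k :
  (forall a, #|[set t : 'I_(n a) | [exists s : multi_index n, (s a == t) && (T s != 0)%R]]| <= k)%N ->
  (#|[set r | (T r != 0)%R]| <= k ^ d)%N.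
Proof.
move=> h.
set F := fun a (t : 'I_(n a)) => t \in [set t : 'I_(n a) | [exists s : multi_index n, (s a == t) && (T s != 0)]].
have sub : [set r | T r != 0] \subset (family F : simpl_pred (multi_index n)).
  apply/subsetP => r; rewrite inE => Tr; apply/familyP => a.
  by rewrite /F inE; apply/existsP; exists r; rewrite eqxx Tr.
apply: (leq_trans (subset_leq_card sub)); rewrite card_family.
have := @foldr_bound _ (fun a => #|F a|) k (enum 'I_d) h.
by rewrite size_enum_ord.
Qed.

Theorem proposition6p3 (p d : nat) :
  prime p -> (3 <= p)%N -> (2 <= d)%N ->
  exists Theta : nat,
    forall (n : 'I_d -> nat) (T : tensor 'F_p n) (S : 'I_d -> {set 'F_p}),
      tensor_rank_ge T Theta ->
      (forall a, 2 <= #|S a|)%N ->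
      forall z : 'F_p,
        exists x : forall a : 'I_d, 'I_(n a) -> 'F_p,
          (forall (a : 'I_d) (j : 'I_(n a)), x a j \in S a) /\
          mlform T x = z.
Proof.
move=> pp p3 d2.
set K := (p.-1 * 2 ^ d.-1)%N.
have K0 : (0 < K)%N by rewrite /K muln_gt0 expn_gt0 /=; lia.
exists (K ^ d)%N => n T S hrank hS z.
have [u [v [uS [vS uv]]]] : exists u v : 'I_d -> 'F_p,
    (forall a, u a \in S a) /\ (forall a, v a \in S a) /\ (forall a, u a != v a).
  pose q a := odflt (0, 0) [pick q : 'F_p * 'F_p | (q.1 \in S a) && (q.2 \in S a) && (q.1 != q.2)].
  have hq : forall a, [/\ (q a).1 \in S a, (q a).2 \in S a & (q a).1 != (q a).2].
    move=> a; rewrite /q; case: pickP => [x /andP[/andP[h1 h2] h3]|h] //=.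
    exfalso; case/card_gt1P: (hS a) => x [y [xS yS xy]]; move: (h (x, y)).
    by rewrite /= xS yS xy.
  exists (fun a => (q a).1), (fun a => (q a).2).
  by split; [|split] => a; case: (hq a).
have [a0 ha0] : exists a0, (K <= #|[set t : 'I_(n a0) |
      [exists s : multi_index n, (s a0 == t) && (T s != 0)%R]]|)%N.
  case: (boolP [exists a, K <= #|[set t : 'I_(n a) |
      [exists s : multi_index n, (s a == t) && (T s != 0)%R]]|]%N) => [/existsP//|].
  rewrite negb_exists => /forallP h; exfalso.
  have h' : forall a, (#|[set t : 'I_(n a) |
      [exists s : multi_index n, (s a == t) && (T s != 0)%R]]| <= K.-1)%N.
    by move=> a; move: (h a); rewrite -ltnNge; lia.
  have c1 := card_nz h'.
  have c2 := hrank _ (rank_small T (Ordinal (leq_trans (isT : (0 < 2)%N) d2))).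
  have : (K.-1 ^ d < K ^ d)%N by rewrite ltn_exp2r; lia.
  lia.
have cT : #|[set: 'I_d]| = d.-1.+1 by rewrite cardsT card_ord; lia.
have [y' hy'] := @iter p d n T u v a0 uv d.-1 setT [ffun=> false] cT (in_setT a0).
have e0 : #|[set i | GG T u v a0 [ffun=> false] setT i]| =
          #|[set t : 'I_(n a0) | [exists s : multi_index n, (s a0 == t) && (T s != 0)%R]]|.
  apply: eq_card => i; rewrite !inE /GG; apply: eq_existsb => s; by rewrite P_setT.
rewrite e0 in hy'.
set J := [set i | GG T u v a0 y' [set a0] i] in hy'.
have cJ : (p.-1 <= #|J|)%N.
  have := leq_trans ha0 hy'; by rewrite /K mulnC leq_pmul2l ?expn_gt0.
have nzJ : forall i, i \in J -> Fi T u v a0 y' i != 0.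
  by move=> i; rewrite inE => /existsP [s /andP [/eqP <- Ps]]; rewrite -P_a0.
set dv := v a0 - u a0.
have dv0 : dv != 0 by rewrite /dv subr_eq0 eq_sym uv.
set tot := \sum_i Fi T u v a0 y' i.
have [Ks [KJ hK]] := subset_sum pp nzJ cJ ((z - u a0 * tot) / dv).
pose zz : {ffun 'I_(LL n) -> bool} := [ffun k => k \in [set wd i | i in Ks]].
exists (XX u v (upd y' a0 zz)); split.
  by move=> a j; rewrite /XX; case: ifP => _; [exact: vS | exact: uS].
rewrite (mlform_split _ _ _ a0).
have e1 : forall i, XX u v (upd y' a0 zz) a0 i * Fi T u v a0 (upd y' a0 zz) i =
    u a0 * Fi T u v a0 y' i + (if i \in Ks then dv * Fi T u v a0 y' i else 0).
  move=> i; rewrite Fi_upd XX_upd_eq ffunE mem_imset; last exact: wd_inj.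
  by case: (i \in Ks); rewrite /dv; ring.
rewrite (eq_bigr _ (fun i _ => e1 i)) big_split /= -big_distrr /= -/tot.
rewrite -big_mkcond /= -big_distrr /= hK [dv * _]mulrC divfK //.
by rewrite addrC subrK.
Qed.
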